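(* Let $S$ be a species tree, $(T,\sigma)$ a gene tree, and $\mu:V(T)\to V(S)\cup E(S)$ a reconciliation map without horizontal gene transfer (satisfying (R0), (R1), (R2), (R3.i), (R3.ii)) that in addition satisfies axiom (R4). Let $x,y\in L(T)$ be two genes with $\sigma(x)\neq\sigma(y)$. If $\operatorname{lca}_S(\sigma(x),\sigma(y))\prec_S \mu(\operatorname{lca}_T(x,y))$, then $\operatorname{lca}_T(x,y)$ is a duplication event, i.e., $\mu(\operatorname{lca}_T(x,y))\in E(S)$.
   Context: A planted phylogenetic tree $T$ has a distinguished leaf $0_T$ (the planted root) whose unique neighbour $\rho_T$ is the root; every other non-leaf vertex has at least two children. $L(T)$ denotes the leaves other than $0_T$. For vertices, $a\preceq_T b$ means $b$ lies on the path from $a$ to $0_T$; $\operatorname{lca}_T(A)$ is the $\preceq_T$-minimal vertex that is $\succeq_T$ every element of $A$. A species tree $S$ is a planted phylogenetic tree with planted root $0_S$, root $\rho_S$ and leaf set $\mathscr{S}$ (the species); $V^0(S)$ denotes the inner vertices of $S$ (neither leaves nor $0_S$). The order $\preceq_S$ is extended to $V(S)\cup E(S)$ by regarding each edge $e=pq$ ($q$ a child of $p$) as lying strictly between $q$ and $p$: $q\prec_S e\prec_S p$, a vertex $w$ satisfies $w\prec_S e$ iff $w\preceq_S q$ and $e\prec_S w$ iff $p\preceq_S w$, and for edges $e=pq,e'=p'q'$, $e\prec_S e'$ iff $p\preceq_S q'$; $\operatorname{lca}_S$ of elements of $V(S)\cup E(S)$ is the $\preceq_S$-minimal vertex above all of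 them. A gene tree $(T,\sigma)$ is a planted phylogenetic tree with $\sigma:L(T)\to\mathscr{S}$. A reconciliation map without horizontal gene transfer is $\mu:V(T)\to V(S)\cup E(S)$ with: (R0) $\mu(v)=0_S$ iff $v=0_T$; (R1) $\mu(v)=\sigma(v)$ for $v\in L(T)$; (R2) $v\prec_T w\Rightarrow\mu(v)\preceq_S\mu(w)$; and for each $v$ with $\mu(v)\in V^0(S)$: (R3.i) $\mu(v)=\operatorname{lca}_S(\mu(v'),\mu(v''))$ for at least two distinct children $v',v''$ of $v$; (R3.ii) $\mu(v'),\mu(v'')$ are $\preceq_S$-incomparable for any two distinct children $v',v''$ of $v$. Axiom (R4): for leaves $x,y,z$ of $T$, if $\mu(\operatorname{lca}_T(x,y))=\mu(\operatorname{lca}_T(x,z))\in V^0(S)$ then $\operatorname{lca}_S(\sigma(x),\sigma(y))=\operatorname{lca}_S(\sigma(x),\sigma(z))$. A vertex $v$ of $T$ is a duplication if $\mu(v)\in E(S)$ and a speciation if $\mu(v)\in V^0(S)$. *)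

(* Defs.v *)
From mathcomp Require Import all_boot.
Set Implicit Arguments. Unset Strict Implicit. Unset Printing Implicit Defensive.

(* A planted phylogenetic tree, given by a parent map on a finite vertex type.
   [r0] is the planted root 0_T (its own parent); every vertex reaches 0_T by
   iterating [par] (so the graph with edges {v, par v}, v <> 0_T, is a tree
   rooted at 0_T).  0_T is a leaf: it has exactly one neighbour (its unique
   child rho_T, the root). *)
Record ptree := PTree {
  pvert :> finType;
  par : pvert -> pvert;
  r0 : pvert;
  par_r0 : par r0 = r0;
  reach_r0 : forall v, exists n, iter n par v = r0;
  r0_one_child : #|[set w | (w != r0) && (par w == r0)]| = 1;
  branching : forall v, v != r0 ->
    #|[set w | (w != r0) && (par w == v)]| != 1
}.

Definition children (T : ptree) (v : T) : {set T} :=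
  [set w | (w != r0 T) && (par w == v)].

Definition is_child (T : ptree) (w v : T) : Prop := v \in children w.

Definition is_leaf (T : ptree) (v : T) : Prop :=
  v <> r0 T /\ children v = set0.

Definition is_inner (T : ptree) (v : T) : Prop :=
  v <> r0 T /\ ~ is_leaf v.

Definition tle (T : ptree) (a b : T) : Prop := exists n, iter n (@par T) a = b.
Definition tlt (T : ptree) (a b : T) : Prop := tle a b /\ a <> b.

Definition is_lca (T : ptree) (x y v : T) : Prop :=
  tle x v /\ tle y v /\ forall w, tle x w -> tle y w -> tle v w.

(* Elements of V(S) \cup E(S): [inl w] is the vertex w, [inr q] is the edge
   (par q, q) with q <> 0_S (every edge pq, q a child of p, is named by its
   lower endpoint q). *)
Definition velt (S : ptree) := (S + S)%type.

Definition valid_elt (S : ptree) (a : velt S) : Prop :=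
  match a with inl _ => True | inr q => q <> r0 S end.

Definition sle (S : ptree) (a b : velt S) : Prop :=
  match a, b with
  | inl w, inl w' => tle w w'
  | inl w, inr q => tle w q
  | inr q, inl w => tle (par q) w
  | inr q, inr q' => q = q' \/ tle (par q) q'
  end.
Definition slt (S : ptree) (a b : velt S) : Prop := sle a b /\ a <> b.

Definition is_lcaS (S : ptree) (a b : velt S) (w : S) : Prop :=
  sle a (inl w) /\ sle b (inl w) /\
  forall w', sle a (inl w') -> sle b (inl w') -> tle w w'.

Definition is_inner_image (S : ptree) (a : velt S) : Prop :=
  exists w, a = inl w /\ is_inner w.

Definition reconciliation (T S : ptree) (sigma : T -> S) (mu : T -> velt S)
  : Prop :=
  (forall x, is_leaf x -> is_leaf (sigma x)) /\
  (forall v, valid_elt (mu v)) /\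
  (forall v, mu v = inl (r0 S) <-> v = r0 T) /\
  (forall v, is_leaf v -> mu v = inl (sigma v)) /\
  (forall v w, tlt v w -> sle (mu v) (mu w)) /\
  (forall v w, mu v = inl w -> is_inner w ->
      exists v1 v2, is_child v v1 /\ is_child v v2 /\ v1 <> v2 /\
                    is_lcaS (mu v1) (mu v2) w) /\
  (forall v w, mu v = inl w -> is_inner w ->
      forall v1 v2, is_child v v1 -> is_child v v2 -> v1 <> v2 ->
        ~ sle (mu v1) (mu v2) /\ ~ sle (mu v2) (mu v1)).

Definition axiom_R4 (T S : ptree) (sigma : T -> S) (mu : T -> velt S) : Prop :=
  forall x y z : T, is_leaf x -> is_leaf y -> is_leaf z ->
  forall u1 u2, is_lca x y u1 -> is_lca x z u2 ->
    mu u1 = mu u2 -> is_inner_image (mu u1) ->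
  forall s1 s2, is_lca (sigma x) (sigma y) s1 -> is_lca (sigma x) (sigma z) s2 ->
    s1 = s2.

(* Main.v *)
From Stdlib Require Import ClassicalEpsilon Classical.
Require Import Defs.
From mathcomp Require Import all_boot.
Set Implicit Arguments. Unset Strict Implicit.

Section Tree.
Variable T : ptree.
Implicit Types a b c v w t : T.

Lemma iter_fix v n : par v = v -> iter n (@par T) v = v.
Proof. by move=> h; elim: n => //= n ->. Qed.

Lemma iter_r0 n : iter n (@par T) (r0 T) = r0 T.
Proof. exact/iter_fix/par_r0. Qed.

Lemma tle_refl a : tle a a.
Proof. by exists 0. Qed.

Lemma tle_trans a b c : tle a b -> tle b c -> tle a c.
Proof. by move=> [n <-] [m <-]; exists (m + n); rewrite iterD. Qed.

Lemma tle_par a : tle a (par a).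
Proof. by exists 1. Qed.

Lemma tle_antisym a b : tle a b -> tle b a -> a = b.
Proof.
move=> [n Hn] [m Hm].
have cyc : forall k, iter (k * (m + n)) (@par T) a = a.
  elim=> [|k IH] //; by rewrite mulSn iterD IH iterD Hn.
case: (reach_r0 a) => N HN.
case: (posnP (m + n)) => [/eqP|pos].
  by rewrite addn_eq0 => /andP[_ /eqP n0]; rewrite -Hn n0.
have ha : a = r0 T.
  have le : N <= N * (m + n) by rewrite leq_pmulr.
  by rewrite -{1}(cyc N) -(subnK le) iterD HN iter_r0.
by rewrite -Hn ha iter_r0.
Qed.

Lemma tle_total a b c : tle a b -> tle a c -> tle b c \/ tle c b.
Proof.
move=> [n <-] [m <-]; case: (leqP n m) => h.
  by left; exists (m - n); rewrite -iterD subnK.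
by right; exists (n - m); rewrite -iterD subnK // ltnW.
Qed.

Lemma tle_step q w : tle q w -> q = w \/ tle (par q) w.
Proof. by case=> [[|n] <-]; [left | right; exists n; rewrite -iterSr]. Qed.

Lemma tle_strict_child s w : tle s w -> s <> w -> w <> r0 T ->
  exists c, c \in children w /\ tle s c.
Proof.
case=> [[|k] <-] // _ hw; exists (iter k (@par T) s); split; last by exists k.
rewrite inE eqxx andbT; apply/eqP => e; apply: hw; by rewrite iterS e par_r0.
Qed.

Lemma child_up u v t : is_child u v -> tle v t -> t = v \/ tle u t.
Proof.
rewrite /is_child inE => /andP[_ /eqP <-] /tle_step [->|h]; by [left|right].
Qed.

Definition tleb a b : bool := if excluded_middle_informative (tle a b) then true else false.
Lemma tlebP a b : reflect (tle a b) (tleb a b).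
Proof. rewrite /tleb; case: excluded_middle_informative => h; by constructor. Qed.

Lemma lca_exists a b : exists c, is_lca a b c.
Proof.
have exP : exists k, tleb b (iter k (@par T) a).
  case: (reach_r0 a) => N HN; case: (reach_r0 b) => M HM.
  by exists N; apply/tlebP; rewrite HN; exists M.
case: (ex_minnP exP) => k /tlebP hk hmin.
exists (iter k (@par T) a); split; first by exists k.
split => // t [m <-] hb.
case: (leqP k m) => h.
  by exists (m - k); rewrite -iterD subnK.
have := hmin m (introT (tlebP _ _) hb); by rewrite leqNgt h.
Qed.

Lemma leaf_below v : v <> r0 T -> exists z, is_leaf z /\ tle z v.
Proof.
pose D (d : T) := #|[set t | tleb t d]|.
suff : forall n v, D v <= n -> v <> r0 T -> exists z, is_leaf z /\ tle z v.
  by move=> H; apply: (H (D v)).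
have Dpos : forall d, 0 < D d.
  by move=> d; apply/card_gt0P; exists d; rewrite inE; apply/tlebP/tle_refl.
elim=> [|n IH] {}v hD hv; first by have := Dpos v; rewrite lt0n -leqn0 hD.
case: (boolP (children v == set0)) => [/eqP h0|/set0Pn [c hc]].
  by exists v; split => //; apply: tle_refl.
have hcv : tle c v by move: hc; rewrite inE => /andP[_ /eqP <-]; apply: tle_par.
have hc0 : c <> r0 T by move: hc; rewrite inE => /andP[/eqP ? _].
have [z [hz hzc]] : exists z, is_leaf z /\ tle z c.
  apply: IH => //; rewrite -ltnS; apply: leq_trans hD; apply: proper_card.
  apply/properP; split.
    by apply/subsetP => t; rewrite !inE => /tlebP h; apply/tlebP; apply: tle_trans hcv.
  exists v; first by rewrite inE; apply/tlebP/tle_refl.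
  rewrite inE; apply/negP => /tlebP hvc.
  have e := tle_antisym hcv hvc.
  move: hc; rewrite inE -e => /andP[_ /eqP hp].
  case: (reach_r0 c) => N; by rewrite iter_fix.
by exists z; split => //; apply: tle_trans hcv.
Qed.

Lemma below_root : exists rho, rho <> r0 T /\ par rho = r0 T /\
  forall v, v <> r0 T -> tle v rho.
Proof.
have := r0_one_child T => /eqP /cards1P [rho hr].
have hin : forall t, (t != r0 T) && (par t == r0 T) = (t == rho).
  by move=> t; have := congr1 (fun A : {set T} => t \in A) hr; rewrite !inE.
have := hin rho; rewrite eqxx => /andP[/eqP h1 /eqP h2].
exists rho; split => //; split => // v hv.
case: (reach_r0 v) => N; elim: N v hv => [|N IH] v hv //.
rewrite iterSr => h.
case: (eqVneq (par v) (r0 T)) => e.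
  have : v == rho by rewrite -hin e eqxx andbT; apply/eqP.
  by move/eqP ->; apply: tle_refl.
apply: tle_trans (tle_par v) (IH _ _ h); exact/eqP.
Qed.
End Tree.

Section VS.
Variable S : ptree.

Lemma sle_trans (A B C : velt S) : sle A B -> sle B C -> sle A C.
Proof.
case: A => [a|a]; case: B => [b|b]; case: C => [c|c] //=.
- exact: tle_trans.
- exact: tle_trans.
- by move=> h1 h2; apply: tle_trans (tle_trans h1 (tle_par _)) h2.
- move=> h1 [<-|h2] //; apply: tle_trans h1 (tle_trans (tle_par _) h2).
- exact: tle_trans.
- move=> h1 h2; right; exact: tle_trans h1 h2.
- move=> [<-|h1] h2 //; apply: tle_trans h1 (tle_trans (tle_par _) h2).
- move=> [<-|h1] [<-|h2]; [by left|by right|by right|].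
  by right; apply: tle_trans h1 (tle_trans (tle_par _) h2).
Qed.

Definition key (A : velt S) : S := match A with inl w => w | inr q => q end.

Lemma sle_key (c : S) (A : velt S) : sle (inl c) A -> tle c (key A).
Proof. by case: A. Qed.

Lemma sle_total (c : S) (A B : velt S) : sle (inl c) A -> sle (inl c) B ->
  sle A B \/ sle B A.
Proof.
move=> /sle_key hA /sle_key hB; case: (tle_total hA hB).
- case: A {hA} => [a|a]; case: B {hB} => [b|b] /= h.
  + by left.
  + by left.
  + by case: (tle_step h) => [->|h']; [right; apply: tle_refl|left].
  + by left; case: (tle_step h) => [->|h']; [left|right].
- case: A {hA} => [a|a]; case: B {hB} => [b|b] /= h.
  + by right.
  + by case: (tle_step h) => [->|h']; [left; apply: tle_refl|right].
  + by right.
  + by right; case: (tle_step h) => [->|h']; [left|right].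
Qed.
End VS.

Theorem lemma3 (T S : ptree) (sigma : T -> S) (mu : T -> velt S) :
  reconciliation sigma mu -> axiom_R4 sigma mu ->
  forall x y : T, is_leaf x -> is_leaf y -> sigma x <> sigma y ->
  forall (u : T) (s : S), is_lca x y u -> is_lca (sigma x) (sigma y) s ->
    slt (inl s) (mu u) ->
    exists q : S, mu u = inr q.
Proof.
move=> [Hsig [Hval [HR0 [HR1 [HR2 [HR3i HR3ii]]]]]] HR4 x y Lx Ly Hneq u s Hu Hs.
case Hmu: (mu u) => [w|q]; last by exists q.
move=> [Hsw Hne]; exfalso; simpl in Hsw.
have sw : s <> w by move=> e; apply: Hne; rewrite e.
case: (eqVneq w (r0 S)) => [hw0|hw0].
  have u0 : u = r0 T by apply/HR0; rewrite Hmu hw0.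
  case: (below_root T) => rho [hr1 [hr2 hr3]].
  have := Hu.2.2 rho (hr3 x Lx.1) (hr3 y Ly.1); rewrite u0 => h.
  by apply: hr1; apply: tle_antisym (tle_trans (tle_par rho) _) h; rewrite hr2; apply: tle_refl.
case: (classic (is_leaf w)) => [Lw|nLw].
  have [c [hc _]] := tle_strict_child Hsw sw (elimN eqP hw0).
  by move: hc; rewrite Lw.2 inE.
have Iw : is_inner w by split => //; apply/eqP.
have [v1 [v2 [c1 [c2 [v12 Hl]]]]] := HR3i u w Hmu Iw.
have [inc1 inc2] := HR3ii u w Hmu Iw v1 v2 c1 c2 v12.
have muleaf : forall a v, is_leaf a -> tle a v -> sle (inl (sigma a)) (mu v).
  move=> a v La hav; case: (classic (a = v)) => [<-|nav].
    by rewrite (HR1 a La); apply: tle_refl.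
  by rewrite -(HR1 a La); apply: HR2.
have childup : forall v, is_child u v -> tle v u.
  by move=> v; rewrite /is_child inE => /andP[_ /eqP <-]; apply: tle_par.
have key : forall v, is_child u v -> sle (mu v) (inl s) \/ sle (inl s) (mu v).
  move=> v cv.
  suff [a [La [hav has]]] : exists a, is_leaf a /\ tle a v /\ tle (sigma a) s.
    exact: (sle_total (muleaf a v La hav) (has : sle (inl (sigma a)) (inl s))).
  case: (classic (tle x v)) => hxv.
    by exists x; split => //; split => //; exact: Hs.1.
  have v0 : v <> r0 T by move: cv; rewrite /is_child inE => /andP[/eqP ? _].
  have [z [Lz hzv]] := leaf_below v0.
  have Hxz : is_lca x z u.
    split; first exact: Hu.1.
    split; first exact: tle_trans hzv (childup v cv).
    move=> t hxt hzt; case: (tle_total hzv hzt) => [hvt|htv]; last first.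
      by exfalso; apply: hxv; apply: tle_trans hxt htv.
    case: (child_up cv hvt) => [e|//]; by exfalso; apply: hxv; rewrite -e.
  have [s2 Hs2] := lca_exists (sigma x) (sigma z).
  have e := HR4 x y z Lx Ly Lz u u Hu Hxz erefl (ex_intro _ w (conj Hmu Iw)) s s2 Hs Hs2.
  by exists z; split => //; split => //; rewrite e; exact: Hs2.2.1.
case: (key v1 c1) => h1; case: (key v2 c2) => h2.
- apply: sw; apply: tle_antisym Hsw _; exact: Hl.2.2 s h1 h2.
- by apply: inc1; apply: sle_trans h1 h2.
- by apply: inc2; apply: sle_trans h2 h1.
- by case: (sle_total h1 h2).
Qed.
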